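(* Let $t_1(x,y):=(x\wedge y)\vee(x\vee y)'$ and $t(x,y,z):=\Bigg(\bigg(\Big(\big((x\vee y)\wedge z\big)'\vee x\Big)\wedge(x\vee y)\bigg)'\vee x\Bigg)\wedge\Big(\big((x\vee y)\wedge z\big)'\vee y\Big)\wedge(x\vee y)$. Then the variety $\mathcal V$ satisfies the identities: (i) $x\vee(x\wedge y)'\approx1$; (ii) $y\vee(x\wedge y)'\approx1$; (iii) $x\approx(x\vee y)\wedge\big(x\vee(x\vee y)'\big)$; (iv) $y\approx(x\vee y)\wedge\big(y\vee(x\vee y)'\big)$; (v) $(x\vee y)\wedge t_1(x,y)\approx x\wedge y$; (vi) $t_1(x,x)\approx1$; (vii) $t\big(x,y,t_1(x,y)\big)\approx x$; (viii) $t(x,y,1)\approx y$.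
   Context: $\mathcal V$ is the variety of algebras $(L,\vee,\wedge,{}',0,1)$ that are bounded lattices with a complementation $'$ (i.e. $x\vee x'\approx1$, $x\wedge x'\approx0$) satisfying the identities $x\vee y'\approx y'\vee\big((x\vee y')\wedge y\big)$ and $x\wedge y\approx x\wedge\big((x\wedge y)\vee x'\big)$. *)

(* Defs.v *)
Record VAlg {L : Type} (join meet : L -> L -> L) (c : L -> L) (zero one : L) : Prop := {
  join_comm : forall x y, join x y = join y x;
  meet_comm : forall x y, meet x y = meet y x;
  join_assoc : forall x y z, join x (join y z) = join (join x y) z;
  meet_assoc : forall x y z, meet x (meet y z) = meet (meet x y) z;
  join_absorb : forall x y, join x (meet x y) = x;
  meet_absorb : forall x y, meet x (join x y) = x;
  join_zero : forall x, join x zero = x;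
  meet_one : forall x, meet x one = x;
  compl_join : forall x, join x (c x) = one;
  compl_meet : forall x, meet x (c x) = zero;
  V_id1 : forall x y, join x (c y) = join (c y) (meet (join x (c y)) y);
  V_id2 : forall x y, meet x y = meet x (join (meet x y) (c x))
}.

Definition t1 {L : Type} (join meet : L -> L -> L) (c : L -> L) (x y : L) : L :=
  join (meet x y) (c (join x y)).

Definition tt {L : Type} (join meet : L -> L -> L) (c : L -> L) (x y z : L) : L :=
  meet (meet (join (c (meet (join (c (meet (join x y) z)) x) (join x y))) x)
             (join (c (meet (join x y) z)) y))
       (join x y).

(* Main.v *)
Require Import Defs.
From Stdlib Require Import Setoid.

Theorem lemma1 (L : Type) (join meet : L -> L -> L) (c : L -> L) (zero one : L) :
  VAlg join meet c zero one ->
  (forall x y, join x (c (meet x y)) = one) /\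
  (forall x y, join y (c (meet x y)) = one) /\
  (forall x y, x = meet (join x y) (join x (c (join x y)))) /\
  (forall x y, y = meet (join x y) (join y (c (join x y)))) /\
  (forall x y, meet (join x y) (t1 join meet c x y) = meet x y) /\
  (forall x, t1 join meet c x x = one) /\
  (forall x y, tt join meet c x y (t1 join meet c x y) = x) /\
  (forall x y, tt join meet c x y one = y).
Proof.
  intros [jc mc ja ma jab mab j0 m1 cj cm A B].
  assert (jid : forall x, join x x = x).
  { intro x. rewrite <- (mab x x) at 2. apply jab. }
  assert (mid : forall x, meet x x = x).
  { intro x. rewrite <- (jab x x) at 2. apply mab. }
  assert (le : forall a b u, meet a b = a -> meet a (join b u) = a).
  { intros a b u H. rewrite <- H at 1. rewrite <- ma, mab. exact H. }
  assert (m1l : forall x, meet one x = x). { intro x; rewrite mc; apply m1. }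
  assert (I : forall x y, join x (c (meet x y)) = one).
  { intros x y. rewrite A. rewrite (mc _ (meet x y)).
    rewrite le. rewrite jc; apply cj.
    rewrite (mc x y), <- ma, mid. reflexivity. }
  assert (II : forall x y, join y (c (meet x y)) = one).
  { intros x y. rewrite mc. apply I. }
  assert (III : forall x y, x = meet (join x y) (join x (c (join x y)))).
  { intros x y. assert (E := B (join x y) x).
    rewrite (mc _ x), mab in E. exact E. }
  assert (IV : forall x y, y = meet (join x y) (join y (c (join x y)))).
  { intros x y. rewrite (jc x y). apply III. }
  assert (V : forall x y, meet (join x y) (t1 join meet c x y) = meet x y).
  { intros x y. unfold t1.
    assert (K : meet (join x y) (meet x y) = meet x y).
    { rewrite mc, <- ma, (jc x y), mab. reflexivity. }
    assert (E := B (join x y) (meet x y)). rewrite K in E. symmetry; exact E. }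
  split; [exact I|]. split; [exact II|]. split; [exact III|].
  split; [exact IV|]. split; [exact V|].
  split.
  { intro x. unfold t1. rewrite mid, jid. apply cj. }
  split.
  { intros x y. unfold tt. rewrite V, (jc (c (meet x y)) x), (jc (c (meet x y)) y), I, II, m1l, m1.
    rewrite (jc (c _) x), mc. symmetry; apply III. }
  { intros x y. unfold tt. rewrite m1.
    rewrite (jc (c (join x y)) x), (mc (join x (c (join x y))) (join x y)), <- (III x y), (jc (c x) x), cj, m1l.
    rewrite (jc (c (join x y)) y), mc. symmetry; apply IV. }
Qed.
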